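(* For every integer $i\ge2$ and every graph $G$, $\hom(S_{2,1^{i-2}};G)\cdot\hom(S_{2,1^{i}};G)\ge \hom(S_{2,1^{i-1}};G)^2$.
   Context: All graphs are finite; $\hom(H;G)$ is the number of graph homomorphisms from $H$ to $G$. For $k\ge0$, $S_{2,1^k}$ is the tree with vertex set $\{1,\ldots,k+3\}$ and edge set $\{\{1,j\}:2\le j\le k+2\}\cup\{\{k+2,k+3\}\}$. *)

(* Defs.v *)
From mathcomp Require Import all_boot all_order.
Set Implicit Arguments. Unset Strict Implicit. Unset Printing Implicit Defensive.

(* A finite (simple) graph: vertex type V : finType, adjacency E : rel V,
   required to be symmetric and irreflexive (stated as hypotheses in the theorem). *)

Definition hom (VH : finType) (EH : rel VH) (V : finType) (E : rel V) : nat :=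
  #|[set f : {ffun VH -> V} | [forall x, forall y, EH x y ==> E (f x) (f y)]]|.

Definition S_edge_lbl (k p q : nat) : bool :=
  [|| (p == 1) && (2 <= q <= k + 2),
      (q == 1) && (2 <= p <= k + 2),
      (p == k + 2) && (q == k + 3)
    | (q == k + 2) && (p == k + 3)].

(* Vertex a : 'I_(k+3) carries label a+1. *)
Definition S_rel (k : nat) : rel 'I_(k + 3) :=
  fun a b => S_edge_lbl k (val a).+1 (val b).+1.

Definition homS (k : nat) (V : finType) (E : rel V) : nat :=
  @hom 'I_(k + 3) (@S_rel k) V E.

(* Main.v *)
Require Import Defs.
From mathcomp Require Import all_boot all_order zify ring.
Set Implicit Arguments. Unset Strict Implicit. Unset Printing Implicit Defensive.

Section Count.
Variables (V : finType) (E : rel V).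
Hypothesis symE : symmetric E.
Variable k : nat.

Definition o0 : 'I_(k+3) := @Ordinal (k+3) 0 ltac:(lia).
Definition om : 'I_(k+3) := @Ordinal (k+3) (k+1) ltac:(lia).
Definition oe : 'I_(k+3) := @Ordinal (k+3) (k+2) ltac:(lia).

Definition deg (v : V) := #|[set w | E v w]|.

Definition Ffam (v u : V) (x : 'I_(k+3)) : pred V :=
  if x == o0 then pred1 v else if x == om then pred1 u
  else if x == oe then [pred w | E u w] else [pred w | E v w].

Lemma ordcases (x : 'I_(k+3)) :
  [\/ x = o0, x = om, x = oe | (1 <= nat_of_ord x <= k) && true].
Proof.
have hx := ltn_ord x.
have : nat_of_ord x = 0 \/ nat_of_ord x = k+1 \/ nat_of_ord x = k+2 \/ (1 <= nat_of_ord x <= k) by lia.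
case=> [h|[h|[h|h]]].
- by apply: Or41; apply: val_inj.
- by apply: Or42; apply: val_inj.
- by apply: Or43; apply: val_inj.
- by apply: Or44; rewrite h.
Qed.

Lemma fiber (v u : V) (f : {ffun 'I_(k+3) -> V}) :
  E v u ->
  ([forall x, forall y, S_rel x y ==> E (f x) (f y)] && (f o0 == v) && (f om == u))
  = (f \in family (Ffam v u)).
Proof.
move=> Evu; apply/idP/familyP.
- case/andP=> /andP[/forallP H /eqP h0] /eqP hm x.
  have Hxy : forall x y, S_rel x y -> E (f x) (f y).
    by move=> x0 y0 s; have /forallP/(_ y0)/implyP := H x0; apply.
  rewrite /Ffam; case: (ordcases x) => [->|->|->|/andP[hx _]].
  + by rewrite eqxx inE h0.
  + have -> : (om == o0) = false by rewrite -val_eqE /=; lia.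
    by rewrite eqxx inE hm.
  + have -> : (oe == o0) = false by rewrite -val_eqE /=; lia.
    have -> : (oe == om) = false by rewrite -val_eqE /=; lia.
    rewrite eqxx -hm; apply: Hxy; rewrite /S_rel /S_edge_lbl /=; lia.
  + have -> : (x == o0) = false by rewrite -val_eqE /=; lia.
    have -> : (x == om) = false by rewrite -val_eqE /=; lia.
    have -> : (x == oe) = false by rewrite -val_eqE /=; lia.
    rewrite -h0; apply: Hxy; rewrite /S_rel /S_edge_lbl /=; lia.
- move=> H.
  have h0 : f o0 = v by have := H o0; rewrite /Ffam eqxx inE => /eqP.
  have hm : f om = u.
    have := H om; rewrite /Ffam.
    have -> : (om == o0) = false by rewrite -val_eqE /=; lia.
    by rewrite eqxx inE => /eqP.
  have he : E u (f oe).
    have := H oe; rewrite /Ffam.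
    have -> : (oe == o0) = false by rewrite -val_eqE /=; lia.
    have -> : (oe == om) = false by rewrite -val_eqE /=; lia.
    by rewrite eqxx.
  have hl : forall x : 'I_(k+3), 1 <= nat_of_ord x <= k+1 -> E v (f x).
    move=> x hx; case: (ordcases x) => [h|->|h|/andP[hx' _]].
    + by rewrite h /= in hx.
    + by rewrite hm.
    + by rewrite h /= in hx; lia.
    + have := H x; rewrite /Ffam.
      have -> : (x == o0) = false by rewrite -val_eqE /=; lia.
      have -> : (x == om) = false by rewrite -val_eqE /=; lia.
      have -> : (x == oe) = false by rewrite -val_eqE /=; lia.
      by [].
  rewrite h0 hm !eqxx !andbT.
  apply/forallP=> x; apply/forallP=> y; apply/implyP.
  rewrite /S_rel /S_edge_lbl.
  case: (ordcases x) => [hx|hx|hx|/andP[hx _]];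
  case: (ordcases y) => [hy|hy|hy|/andP[hy _]]; subst => /=; try lia;
  rewrite ?h0 ?hm //.
  all: try (move=> _; rewrite symE; exact: he).
  all: try (move=> _; apply: hl; rewrite /=; lia).
  all: try (move=> _; rewrite symE; apply: hl; rewrite /=; lia).
Qed.

Lemma cardP : #|[pred x : 'I_(k+3) | (x != o0) && (x != om) && (x != oe)]| = k.
Proof.
have := card_ord (k+3).
rewrite (cardD1 o0) (cardD1 om) (cardD1 oe) !inE.
have -> : (om == o0) = false by rewrite -val_eqE /=; lia.
have -> : (oe == o0) = false by rewrite -val_eqE /=; lia.
have -> : (oe == om) = false by rewrite -val_eqE /=; lia.
rewrite /= => h.
move: h; set D := #|[predD1 _ & oe]| => h.
suff -> : #|[pred x : 'I_(k+3) | (x != o0) && (x != om) && (x != oe)]| = D by lia.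
apply: eq_card => x; rewrite !inE; by case: (x != o0); case: (x != om); case: (x != oe).
Qed.

Lemma homS_sum : homS k E = \sum_v \sum_u E v u * (deg v ^ k * deg u).
Proof.
rewrite /homS /hom -sum1_card.
rewrite (partition_big (fun f : {ffun _} => f o0) predT) //=.
apply: eq_bigr => v _.
rewrite (partition_big (fun f : {ffun _} => f om) predT) //=.
apply: eq_bigr => u _.
case Evu: (E v u); last first.
  rewrite mul0n big_pred0 // => f; apply/negbTE; apply/negP => /andP[/andP[]].
  rewrite inE => /forallP/(_ o0)/forallP/(_ om)/implyP H /eqP h0 /eqP hm.
  have : E (f o0) (f om) by apply: H; rewrite /S_rel /S_edge_lbl /=; lia.
  by rewrite h0 hm Evu.
rewrite mul1n (eq_bigl [in family (Ffam v u)]) ?sum1_card; last first.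
  by move=> f; rewrite inE -fiber.
rewrite card_family foldrE big_map big_enum /=.
have nm0 : (om != o0) by rewrite -val_eqE /=; lia.
have ne0 : (oe != o0) by rewrite -val_eqE /=; lia.
have nem : (oe != om) by rewrite -val_eqE /=; lia.
rewrite (bigD1 o0) // (bigD1 om) ?nm0 // (bigD1 oe) ?ne0 ?nem //=.
rewrite /Ffam eqxx (negbTE nm0) (negbTE ne0) (negbTE nem) !eqxx !card1 !mul1n.
rewrite (eq_bigr (fun _ => deg v)); last first.
  move=> x /andP[/andP[h1 h2] h3]; rewrite (negbTE h1) (negbTE h2) (negbTE h3).
  by rewrite /deg cardsE.
rewrite prod_nat_const.
rewrite cardP /deg cardsE mulnC.
by congr (_ * _); apply: eq_card => w; rewrite inE.
Qed.
End Count.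
Lemma pt (p q x y b c : nat) :
  x * p * b * (y * q * c) + x * p * b * (y * q * c) <=
    p * b * (y * (y * q) * c) + q * c * (x * (x * p) * b).
Proof.
have h : 2 * (x * y) <= x * x + y * y.
  case: (leqP y x) => hxy.
    rewrite -(subnK hxy); move: (x - y) => d; nia.
  rewrite -(subnK (ltnW hxy)); move: (y - x) => d; nia.
have -> : p * b * (y * (y * q) * c) + q * c * (x * (x * p) * b) = (p*b*q*c) * (x*x + y*y) by ring.
have -> : x * p * b * (y * q * c) + x * p * b * (y * q * c) = (p*b*q*c) * (2 * (x*y)) by ring.
by apply: leq_mul.
Qed.

Lemma cs (I : finType) (a b : I -> nat) k :
  (\sum_v a v ^ k.+1 * b v) ^ 2 <= (\sum_v a v ^ k * b v) * (\sum_v a v ^ k.+2 * b v).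
Proof.
rewrite -(leq_pmul2l (isT : 0 < 2)).
rewrite big_distrlr /= -mulnn big_distrlr /=.
set L := \sum_v \sum_w (a v ^ k * b v * (a w ^ k.+2 * b w)).
have eL : L = \sum_v \sum_w (a w ^ k * b w * (a v ^ k.+2 * b v)).
  rewrite /L exchange_big /=. done.
rewrite !mul2n -!addnn {2}eL /L -!big_split /=.
apply: leq_sum => v _.
rewrite -!big_split /=; apply: leq_sum => w _.
rewrite !expnS.
exact: pt.
Qed.

Theorem theorem3p4 (i : nat) (V : finType) (E : rel V) :
  2 <= i -> symmetric E -> irreflexive E ->
  homS (i - 2) E * homS i E >= (homS (i - 1) E) ^ 2.
Proof.
move=> hi symE _.
pose bb v := \sum_u E v u * deg E u.
have hform : forall k, homS k E = \sum_v deg E v ^ k * bb v.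
  move=> k; rewrite (@homS_sum V E symE k); apply: eq_bigr => v _.
  rewrite /bb big_distrr /=; apply: eq_bigr => u _.
  by rewrite mulnCA.
case: i hi => [|[|k]] // _.
have -> : k.+2 - 2 = k by lia.
have -> : k.+2 - 1 = k.+1 by lia.
rewrite !hform; exact: cs.
Qed.
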